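(* Let $1\le s<t\le k$ and $u,v\ge 2$ be integers. If there exist an AOA$(s,t,k,v)$ and an AOA$(s,t,k,u)$, then there exists an AOA$(s,t,k,uv)$.
   Context: An orthogonal array OA$(t,k,v)$ (with $1\le t\le k$) is a $v^t\times k$ array with entries from a set $X$ of size $v$ such that, for every choice of $t$ of its columns, each $t$-tuple in $X^t$ appears exactly once as a row of the corresponding $v^t\times t$ subarray. For integers $1\le s\le t\le k$, an augmented orthogonal array AOA$(s,t,k,v)$ is a $v^t\times(k+1)$ array $A$ such that: (1) the first $k$ columns of $A$ form an OA$(t,k,v)$ on a symbol set $X$ of size $v$; (2) the last column of $A$ has entries from a set $Y$ of size $v^{t-s}$; (3) for any choice of $s$ of the first $k$ columns, these $s$ columns together with the last column contain every $(s+1)$-tuple of $X^s\times Y$ exactly once as a row. *)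

(* Defs.v *)
From mathcomp Require Import all_boot.
Set Implicit Arguments. Unset Strict Implicit. Unset Printing Implicit Defensive.

Definition is_OA (X : finType) (N t k : nat) (A : 'I_N -> 'I_k -> X) : Prop :=
  N = #|X| ^ t /\
  forall c : 'I_t -> 'I_k, injective c ->
  forall f : {ffun 'I_t -> X},
    #|[set r : 'I_N | [forall j : 'I_t, A r (c j) == f j]]| = 1.

(* AOA(s,t,k,v): a v^t x (k+1) array; first k columns (A) form an
   OA(t,k,v) over X with |X| = v, last column (L) has entries in Y with
   |Y| = v^(t-s), and for any s of the first k columns, these together
   with the last column contain every (s+1)-tuple of X^s x Y exactly once. *)
Definition is_AOA (X Y : finType) (N s t k : nat)
    (A : 'I_N -> 'I_k -> X) (L : 'I_N -> Y) : Prop :=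
  [/\ @is_OA X N t k A,
      #|Y| = #|X| ^ (t - s) &
      forall c : 'I_s -> 'I_k, injective c ->
      forall (f : {ffun 'I_s -> X}) (y : Y),
        #|[set r : 'I_N | [forall j : 'I_s, A r (c j) == f j] && (L r == y)]| = 1 ].

Definition AOA_exists (s t k v : nat) : Prop :=
  exists (A : 'I_(v ^ t) -> 'I_k -> 'I_v) (L : 'I_(v ^ t) -> 'I_(v ^ (t - s))),
    @is_AOA _ _ (v ^ t) s t k A L.

(* Main.v *)
Require Import Defs.
From mathcomp Require Import all_boot.

Definition isA (R X Y : finType) (s t k : nat) (A : R -> 'I_k -> X) (L : R -> Y) :=
  [/\ #|R| = #|X| ^ t,
      forall c : 'I_t -> 'I_k, injective c -> forall f : {ffun 'I_t -> X},
        #|[set r | [forall j, A r (c j) == f j]]| = 1,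
      #|Y| = #|X| ^ (t - s) &
      forall c : 'I_s -> 'I_k, injective c -> forall (f : {ffun 'I_s -> X}) (y : Y),
        #|[set r | [forall j, A r (c j) == f j] && (L r == y)]| = 1].

Lemma isA_of {X Y : finType} {N s t k A L} :
  @is_AOA X Y N s t k A L -> @isA 'I_N X Y s t k A L.
Proof. by case=> [[HN H1] H2 H3]; split=> //; rewrite card_ord. Qed.

Lemma of_isA (X Y : finType) N s t k A L :
  @isA 'I_N X Y s t k A L -> @is_AOA X Y N s t k A L.
Proof. by case=> HN H1 H2 H3; split=> //; split=> //; rewrite -HN card_ord. Qed.

Lemma forall_andb (T : finType) (P Q : pred T) :
  [forall j, P j && Q j] = [forall j, P j] && [forall j, Q j].
Proof.
apply/forallP/andP => [H|[/forallP H1 /forallP H2] j].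
  by split; apply/forallP => j; case/andP: (H j).
by rewrite H1 H2.
Qed.

Lemma isA_prod {R1 R2 X1 X2 Y1 Y2 : finType} {s t k A1 L1 A2 L2} :
  @isA R1 X1 Y1 s t k A1 L1 -> @isA R2 X2 Y2 s t k A2 L2 ->
  @isA (R1 * R2)%type (X1 * X2)%type (Y1 * Y2)%type s t k
    (fun r j => (A1 r.1 j, A2 r.2 j)) (fun r => (L1 r.1, L2 r.2)).
Proof.
case=> HR1 O1 HY1 B1 [HR2 O2 HY2 B2]; split.
- by rewrite !card_prod HR1 HR2 expnMn.
- move=> c ic f.
  have -> : [set r : R1 * R2 | [forall j, (A1 r.1 (c j), A2 r.2 (c j)) == f j]] =
    setX [set r | [forall j, A1 r (c j) == [ffun j => (f j).1] j]]
         [set r | [forall j, A2 r (c j) == [ffun j => (f j).2] j]].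
    apply/setP => -[r1 r2]; rewrite !inE /= -forall_andb.
    by apply: eq_forallb => j; rewrite !ffunE; case: (f j) => a b.
  by rewrite cardsX O1 // O2.
- by rewrite !card_prod HY1 HY2 expnMn.
- move=> c ic f [y1 y2].
  have -> : [set r : R1 * R2 | [forall j, (A1 r.1 (c j), A2 r.2 (c j)) == f j]
                 && ((L1 r.1, L2 r.2) == (y1, y2))] =
    setX [set r | [forall j, A1 r (c j) == [ffun j => (f j).1] j] && (L1 r == y1)]
         [set r | [forall j, A2 r (c j) == [ffun j => (f j).2] j] && (L2 r == y2)].
    apply/setP => -[r1 r2]; rewrite !inE /= xpair_eqE.
    have -> : [forall j, (A1 r1 (c j), A2 r2 (c j)) == f j] =
       [forall j, A1 r1 (c j) == [ffun j => (f j).1] j] &&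
       [forall j, A2 r2 (c j) == [ffun j => (f j).2] j].
      rewrite -forall_andb; apply: eq_forallb => j; rewrite !ffunE.
      by case: (f j) => a b.
    by rewrite -!andbA; congr (_ && _); rewrite andbCA.
  by rewrite cardsX B1 // B2.
Qed.

Lemma isA_transport {R R' X X' Y Y' : finType} {s t k A L}
  (eR : R' -> R) (eX : X -> X') (eY : Y -> Y') :
  bijective eR -> bijective eX -> bijective eY ->
  @isA R X Y s t k A L ->
  @isA R' X' Y' s t k (fun r j => eX (A (eR r) j)) (fun r => eY (L (eR r))).
Proof.
move=> bR [gX eXK gXK] [gY eYK gYK] [HR O HY B].
have cR : forall P : pred R, #|[set r' | P (eR r')]| = #|[set r | P r]|.
  move=> P; rewrite -(on_card_preimset (onW_bij _ bR)).
  by apply: eq_card => r; rewrite !inE.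
have eqX : forall x y, (eX x == y) = (x == gX y).
  by move=> x y; rewrite -{1}(gXK y) (can_eq eXK).
have eqY : forall x y, (eY x == y) = (x == gY y).
  by move=> x y; rewrite -{1}(gYK y) (can_eq eYK).
have cX : #|X'| = #|X| by rewrite (bij_eq_card (Bijective eXK gXK)).
split.
- by rewrite (bij_eq_card bR) cX.
- move=> c ic f.
  rewrite (cR (fun r => [forall j, eX (A r (c j)) == f j])).
  rewrite -(O c ic [ffun j => gX (f j)]).
  by apply: eq_card => r; rewrite !inE; apply: eq_forallb => j; rewrite ffunE eqX.
- by rewrite cX -HY (bij_eq_card (Bijective eYK gYK)).
- move=> c ic f y.
  rewrite (cR (fun r => [forall j, eX (A r (c j)) == f j] && (eY (L r) == y))).
  rewrite -(B c ic [ffun j => gX (f j)] (gY y)).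
  apply: eq_card => r; rewrite !inE eqY; congr (_ && _).
  by apply: eq_forallb => j; rewrite ffunE eqX.
Qed.

Lemma bij_of_card (T : finType) n : #|T| = n -> exists f : 'I_n -> T, bijective f.
Proof.
move=> H; subst n; exists enum_val; exact: enum_val_bij.
Qed.

Lemma bij_of_card' (T : finType) n : #|T| = n -> exists f : T -> 'I_n, bijective f.
Proof.
move=> H; subst n; exists enum_rank; exact: enum_rank_bij.
Qed.

Theorem theorem2p1 (s t k u v : nat) :
  1 <= s -> s < t -> t <= k -> 2 <= u -> 2 <= v ->
  AOA_exists s t k v -> AOA_exists s t k u -> AOA_exists s t k (u * v).
Proof.
move=> _ _ _ _ _ [A1 [L1 H1]] [A2 [L2 H2]].
have P := isA_prod (isA_of H2) (isA_of H1).
have [eR bR] : exists f : 'I_((u * v) ^ t) -> ('I_(u ^ t) * 'I_(v ^ t))%type, bijective f.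
  by apply: bij_of_card; rewrite card_prod !card_ord expnMn.
have [eX bX] : exists f : ('I_u * 'I_v)%type -> 'I_(u * v), bijective f.
  by apply: bij_of_card'; rewrite card_prod !card_ord.
have [eY bY] : exists f : ('I_(u ^ (t - s)) * 'I_(v ^ (t - s)))%type ->
     'I_((u * v) ^ (t - s)), bijective f.
  by apply: bij_of_card'; rewrite card_prod !card_ord expnMn.
have Q := isA_transport _ _ _ bR bX bY P.
by exists (fun r j => eX ((A2 (eR r).1 j), A1 (eR r).2 j)),
   (fun r => eY (L2 (eR r).1, L1 (eR r).2)); apply: of_isA.
Qed.
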